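(* Let $(G,\mathcal{B}_1,\mathcal{B}_2)$ be a Rota-Baxter system of groups with cocycle $\Phi$. Then $\Phi(G)=G_{1_G}$, and every element $a\in\Phi(G)$ can be written uniquely as $a=a_1a_2$ with $(a_1,a_2)\in G_\Theta$.
   Context: A Rota-Baxter system of groups is a triple $(G,\mathcal{B}_1,\mathcal{B}_2)$ where $G$ is a group with identity $1_G$ and $\mathcal{B}_1,\mathcal{B}_2:G\to G$ are maps such that for all $a,b\in G$: $\mathcal{B}_1(a)\mathcal{B}_1(b)=\mathcal{B}_1(\mathcal{B}_1(a)b\mathcal{B}_2(a))$ and $\mathcal{B}_2(b)\mathcal{B}_2(a)=\mathcal{B}_2(\mathcal{B}_1(a)b\mathcal{B}_2(a))$. Descendent operation: $a\circ b=\mathcal{B}_1(a)b\mathcal{B}_2(a)$; cocycle: $\Phi(a)=\mathcal{B}_1(a)\mathcal{B}_2(a)$; $e_a=\mathcal{B}_1(a)^{-1}a\mathcal{B}_2(a)^{-1}$; $G_{1_G}=\{a\in G\mid a\circ e_{1_G}=a\}$. Let $\operatorname{Ker}(\mathcal{B}_i)=\{a\in G\mid \mathcal{B}_i(a)=1_G\}$, $G_1=\mathcal{B}_1(G)$, $G_2=\mathcal{B}_2(G)$ (these are subgroups of $G$), $H_1=\mathcal{B}_1(\operatorname{Ker}(\mathcal{B}_2))$, $H_2=\mathcal{B}_2(\operatorname{Ker}(\mathcal{B}_1))$ (these are normal subgroups of $G_1$, $G_2$ respectively). The map $\Theta:G_1/H_1\to G_2/H_2$, $\Theta(\mathcal{B}_1(a)H_1)=\mathcal{B}_2(a)H_2$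 ($a\in G$), is well defined. Set $G_\Theta=\{(a_1,a_2)\in G_1\times G_2\mid \Theta(a_1H_1)=a_2H_2\}$. *)

(* Defs.v *)
Record Group := {
  carrier :> Type;
  gmul : carrier -> carrier -> carrier;
  gone : carrier;
  ginv : carrier -> carrier;
  gmulA : forall x y z, gmul x (gmul y z) = gmul (gmul x y) z;
  gmul1l : forall x, gmul gone x = x;
  gmul1r : forall x, gmul x gone = x;
  gmulVl : forall x, gmul (ginv x) x = gone;
  gmulVr : forall x, gmul x (ginv x) = gone
}.

Arguments gmul {g}.
Arguments gone {g}.
Arguments ginv {g}.

Section RBS.
Variable G : Group.

Local Notation "x * y" := (gmul x y).
Local Notation "x ^-1" := (ginv x) (at level 3, format "x ^-1").
Local Notation "1" := (@gone G).

Definition is_RB_system (B1 B2 : G -> G) : Prop :=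
  (forall a b : G, B1 a * B1 b = B1 (B1 a * b * B2 a)) /\
  (forall a b : G, B2 b * B2 a = B2 (B1 a * b * B2 a)).

Variables B1 B2 : G -> G.

Definition desc_op (a b : G) : G := B1 a * b * B2 a.

Definition cocycle (a : G) : G := B1 a * B2 a.

Definition e_elt (a : G) : G := (B1 a)^-1 * a * (B2 a)^-1.

Definition G_one (a : G) : Prop := desc_op a (e_elt 1) = a.

Definition in_Phi_image (a : G) : Prop := exists b : G, cocycle b = a.

Definition Ker (B : G -> G) (a : G) : Prop := B a = 1.

Definition G1 (x : G) : Prop := exists a : G, B1 a = x.
Definition G2 (x : G) : Prop := exists a : G, B2 a = x.

Definition H1 (x : G) : Prop := exists a : G, Ker B2 a /\ B1 a = x.
Definition H2 (x : G) : Prop := exists a : G, Ker B1 a /\ B2 a = x.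

Definition lcoset (H : G -> Prop) (x : G) (y : G) : Prop :=
  exists h : G, H h /\ y = x * h.
Definition same_lcoset (H : G -> Prop) (x y : G) : Prop :=
  forall z : G, lcoset H x z <-> lcoset H y z.

(* G_Theta = {(a1,a2) in G1 x G2 | Theta(a1 H1) = a2 H2}, where
   Theta(B1(a) H1) = B2(a) H2; unfolded: a1 H1 = B1(a) H1 for some a,
   and then a2 H2 = B2(a) H2 (well-definedness of Theta). *)
Definition G_Theta (p : G * G) : Prop :=
  G1 (fst p) /\ G2 (snd p) /\
  exists a : G, same_lcoset H1 (fst p) (B1 a) /\ same_lcoset H2 (snd p) (B2 a).

End RBS.

(* Main.v *)
Require Import Defs.
From Stdlib Require Import Setoid.

Section Aux.
Variable G : Group.
Local Notation "x * y" := (gmul x y).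
Local Notation "x ^-1" := (ginv x) (at level 3, format "x ^-1").
Local Notation "1" := (@gone G).

Lemma mulKV (x y : G) : x * y^-1 * y = x.
Proof. rewrite <- gmulA, gmulVl, gmul1r; reflexivity. Qed.
Lemma mulVK (x y : G) : x * y * y^-1 = x.
Proof. rewrite <- gmulA, gmulVr, gmul1r; reflexivity. Qed.

Lemma cancel_l (x y z : G) : x * y = x * z -> y = z.
Proof.
  intro H. rewrite <- (gmul1l _ y), <- (gmul1l _ z), <- (gmulVl _ x), <- !gmulA, H.
  reflexivity.
Qed.
Lemma cancel_r (x y z : G) : y * x = z * x -> y = z.
Proof.
  intro H. rewrite <- (mulVK y x), <- (mulVK z x), H. reflexivity.
Qed.
Lemma inv_r (x y : G) : x * y = 1 -> y = x^-1.
Proof. intro H. apply (cancel_l x). rewrite H, gmulVr. reflexivity. Qed.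
End Aux.

Global Hint Rewrite gmulA gmulVl gmulVr gmul1l gmul1r mulKV mulVK : grp.

Theorem theorem5p7 (G : Group) (B1 B2 : G -> G) :
  is_RB_system G B1 B2 ->
  (forall a : G, in_Phi_image G B1 B2 a <-> G_one G B1 B2 a) /\
  (forall a : G, in_Phi_image G B1 B2 a ->
     exists! p : G * G, G_Theta G B1 B2 p /\ a = gmul (fst p) (snd p)).
Proof.
  intros [A1 A2].
  set (x := B1 gone). set (y := B2 gone).
  assert (Be1 : B1 (gmul (ginv x) (ginv y)) = gone).
  { apply (cancel_l G x). rewrite gmul1r. unfold x at 1.
    rewrite A1. f_equal. fold x y. autorewrite with grp. reflexivity. }
  assert (Be2 : B2 (gmul (ginv x) (ginv y)) = gone).
  { apply (cancel_r G y). rewrite gmul1l. unfold y at 2.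
    rewrite A2. f_equal. fold x y. autorewrite with grp. reflexivity. }
  assert (S1 : forall w, B1 (gmul (gmul (ginv x) w) (ginv y)) = gmul (ginv x) (B1 w)).
  { intro w. apply (cancel_l G x). unfold x at 1. rewrite A1. fold x y.
    autorewrite with grp. reflexivity. }
  assert (S2 : forall w, B2 (gmul (gmul (ginv x) w) (ginv y)) = gmul (B2 w) (ginv y)).
  { intro w. apply (cancel_r G y). unfold y at 2. rewrite A2. fold x y.
    autorewrite with grp. reflexivity. }
  split.
  - intro a. unfold in_Phi_image, G_one, desc_op, e_elt, cocycle. split.
    + intros [b <-]. fold x y.
      assert (E1 : B1 (gmul (B1 b) (B2 b)) = gmul (B1 b) x).
      { unfold x. rewrite A1. f_equal. autorewrite with grp. reflexivity. }
      assert (E2 : B2 (gmul (B1 b) (B2 b)) = gmul y (B2 b)).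
      { unfold y. rewrite A2. f_equal. autorewrite with grp. reflexivity. }
      rewrite E1, E2. autorewrite with grp. reflexivity.
    + intro H. fold x y in H.
      set (v := gmul (gmul (ginv x) (gmul (ginv x) (ginv y))) (ginv y)).
      exists (gmul (gmul (B1 a) v) (B2 a)).
      rewrite <- A1, <- A2.
      assert (V1 : B1 v = ginv x).
      { unfold v. rewrite S1, Be1, gmul1r. reflexivity. }
      assert (V2 : B2 v = ginv y).
      { unfold v. rewrite S2, Be2, gmul1l. reflexivity. }
      rewrite V1, V2. etransitivity; [|exact H]. autorewrite with grp. reflexivity.
  - set (e := gmul (ginv x) (ginv y)).
    assert (Rep : forall p, G_Theta G B1 B2 p -> exists d, fst p = B1 d /\ snd p = B2 d).
    { intros [a1 a2] [_ [_ [c [Hc1 Hc2]]]]. simpl in *.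
      destruct (proj1 (Hc1 a1)) as [h1 [[k [Hk Hk1]] E1]].
      { exists gone. split. exists e. split; [exact Be2|exact Be1]. rewrite gmul1r; reflexivity. }
      destruct (proj1 (Hc2 a2)) as [h2 [[m [Hm Hm2]] E2]].
      { exists gone. split. exists e. split; [exact Be1|exact Be2]. rewrite gmul1r; reflexivity. }
      unfold Ker in Hk, Hm. subst h1 h2.
      set (c1 := gmul (gmul (B1 c) k) (B2 c)).
      assert (C1 : B1 c1 = a1). { unfold c1. rewrite <- A1. auto. }
      assert (C2 : B2 c1 = B2 c). { unfold c1. rewrite <- A2, Hk, gmul1l. reflexivity. }
      assert (F : gmul c1 (B2 m) = gmul (gmul (B1 m) c1) (B2 m)) by (rewrite Hm, gmul1l; reflexivity).
      exists (gmul c1 (B2 m)). rewrite F. split.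
      - rewrite <- A1, Hm, gmul1l, C1. reflexivity.
      - rewrite <- A2, C2. exact E2. }
    assert (Uniq : forall d d', gmul (B1 d) (B2 d) = gmul (B1 d') (B2 d') -> B1 d = B1 d' /\ B2 d = B2 d').
    { intros d d' H.
      set (t := gmul (gmul (ginv (B1 d')) d) (ginv (B2 d'))).
      assert (T1 : gmul (B1 d') (B1 t) = B1 d).
      { rewrite A1. f_equal. unfold t. autorewrite with grp. reflexivity. }
      assert (T2 : gmul (B2 t) (B2 d') = B2 d).
      { rewrite A2. f_equal. unfold t. autorewrite with grp. reflexivity. }
      assert (T : gmul (B1 t) (B2 t) = gone).
      { apply (cancel_l G (B1 d')). apply (cancel_r G (B2 d')).
        rewrite gmul1r. rewrite <- H, <- T1, <- T2. autorewrite with grp. reflexivity. }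
      assert (U : B1 t = gone).
      { apply (cancel_r G x). rewrite gmul1l. unfold x. rewrite A1. f_equal.
        pose proof (inv_r G _ _ T) as T'. rewrite T'. autorewrite with grp. reflexivity. }
      assert (D1 : B1 d = B1 d'). { rewrite <- T1, U, gmul1r. reflexivity. }
      split; [exact D1|]. rewrite D1 in H. exact (cancel_l G _ _ _ H). }
    intros a [b <-]. exists (B1 b, B2 b). split.
    + split; [|reflexivity]. split; [exists b; reflexivity|]. split; [exists b; reflexivity|].
      exists b. simpl. split; intro z; tauto.
    + intros [a1 a2] [HT Ha]. destruct (Rep _ HT) as [d [E1 E2]]. simpl in *.
      subst a1 a2. unfold cocycle in Ha. destruct (Uniq _ _ Ha) as [-> ->]. reflexivity.
Qed.
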